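(* Let $k\ge1$, $n\ge 2k+1$ and $l\ge 2$. Then $\mathrm{ex}(J(n;k,k+1),C_{2l})\ge \binom{n}{k+1}=\frac{1}{k+1}e(J(n;k,k+1))$.
   Context: The doubled Johnson graph $J(n;k,k+1)$ is the bipartite graph with vertex set $\binom{[n]}{k}\cup\binom{[n]}{k+1}$ (subsets of $[n]$), where two vertices $u,v$ are adjacent iff $u\subset v$ or $v\subset u$. $\mathrm{ex}(G,H)$ is the maximum number of edges of a subgraph of $G$ containing no subgraph isomorphic to $H$; $C_m$ is the cycle of length $m$. *)

(* Defs.v *)
From mathcomp Require Import all_boot.
Set Implicit Arguments. Unset Strict Implicit. Unset Printing Implicit Defensive.

(* A simple graph on a finite vertex type V is given by its edge set:
   a set of 2-element subsets {u, v} of V. *)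

(* F contains a cycle of length m (as a subgraph): there are m distinct
   vertices f 0, ..., f (m-1) with {f i, f (i+1 mod m)} an edge of F for all i.
   Meaningful for m >= 3. *)
Definition has_cycle (V : finType) (F : {set {set V}}) (m : nat) : bool :=
  [exists f : {ffun 'I_m -> V},
     injectiveb f && [forall i : 'I_m, [set f i; f (ordS i)] \in F]].

Definition ex_cycle (V : finType) (G : {set {set V}}) (m : nat) : nat :=
  \max_(F : {set {set V}} | (F \subset G) && ~~ has_cycle F m) #|F|.

(* The doubled Johnson graph J(n;k,k+1): vertices are subsets of [n]
   (those of size k or k+1 are the only non-isolated ones; edges join a
   k-set u to a (k+1)-set v with u \subset v). *)
Definition doubled_johnson_edges (n k : nat) : {set {set {set 'I_n}}} :=
  [set e | [exists u : {set 'I_n}, exists v : {set 'I_n},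
     [&& e == [set u; v], #|u| == k, #|v| == k.+1 & u \subset v]]].

(* Main.v *)
Require Import Defs.
From mathcomp Require Import all_boot.
From mathcomp Require Import zify.
Set Implicit Arguments. Unset Strict Implicit.

Lemma ordS_ne m (i : 'I_m) : 3 <= m -> ordS i != i /\ ordS (ordS i) != i.
Proof.
move=> Hm; have := ltn_ord i; move: i => [q /= Hq] _.
split; apply/eqP => /(congr1 val) /=.
  have [Hl|Hl] := ltnP (q.+1) m; first by rewrite modn_small //; lia.
  have -> : q.+1 = m by lia.
  by rewrite modnn; lia.
have [Hl|Hl] := ltnP (q.+1) m.
  rewrite (modn_small Hl).
  have [Hl2|Hl2] := ltnP (q.+2) m; first by rewrite modn_small //; lia.
  have -> : q.+2 = m by lia.
  by rewrite modnn; lia.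
have -> : q.+1 = m by lia.
by rewrite modnn modn_small; lia.
Qed.

Section S.
Variables n k : nat.
Local Notation T := {set 'I_n}.
Local Notation G := (doubled_johnson_edges n k).

Definition hh (p : T * 'I_n) : {set T} := [set p.1 :\ p.2; p.1].
Definition PP : {set T * 'I_n} := [set p : T * 'I_n | (#|p.1| == k.+1) && (p.2 \in p.1)].

Lemma PP_card : #|PP| = 'C(n, k.+1) * k.+1.
Proof.
rewrite -sum1_card.
have -> : \sum_(p in PP) 1 = \sum_(p : T * 'I_n | (#|p.1| == k.+1) && (p.2 \in p.1)) 1.
  by apply: eq_bigl => p; rewrite inE.
rewrite -(@pair_big_dep _ _ _ _ _ (fun v : T => #|v| == k.+1) (fun (v : T) (x : 'I_n) => x \in v) (fun _ _ => 1)) /=.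
rewrite (eq_bigr (fun _ => k.+1)); last first.
  move=> v /eqP Hv; rewrite sum1_card; rewrite -Hv; apply: eq_card => x; by [].
rewrite sum_nat_const.
have -> : #|[pred v : T | #|v| == k.+1]| = #|[set v : T | #|v| == k.+1]|.
  by apply: eq_card => v; rewrite inE.
by rewrite card_draws card_ord.
Qed.

Lemma PP_inj : {in PP &, injective hh}.
Proof.
move=> [v x] [w y]; rewrite !inE /= /hh => /andP[/eqP Hv Hx] /andP[/eqP Hw Hy] E.
have Cv : #|v :\ x| = k by move: (cardsD1 x v); rewrite Hx Hv; case.
have Cw : #|w :\ y| = k by move: (cardsD1 y w); rewrite Hy Hw; case.
have vw : v = w.
  have : v \in [set w :\ y; w] by rewrite -E !inE eqxx orbT.
  rewrite !inE => /orP[/eqP H|/eqP //]. by move: Hv; rewrite H Cw => /eqP; lia.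
subst w.
have : v :\ x \in [set v :\ y; v] by rewrite -E !inE eqxx.
rewrite !inE => /orP[/eqP H|/eqP H]; last by move: Cv; rewrite H Hv; lia.
have : x \notin v :\ y by rewrite -H !inE eqxx.
rewrite !inE Hx andbT negbK => /eqP ->. by [].
Qed.

Lemma G_eq : G = hh @: PP.
Proof.
apply/setP => e; apply/idP/idP.
- rewrite inE => /existsP[u /existsP[v /and4P[/eqP -> /eqP Hu /eqP Hv Huv]]].
  have : 0 < #|v :\: u|.
    rewrite cardsD; move: (subset_leq_card (setIS v (subxx u))).
    have -> : v :&: u = u by apply/setIidPr.
    rewrite Hu Hv; lia.
  case/card_gt0P => x; rewrite inE => /andP[xu xv].
  apply/imsetP; exists (v, x); first by rewrite inE /= Hv eqxx xv.
  rewrite /hh /=; congr [set _; _].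
  apply/eqP; rewrite eqEcard; apply/andP; split.
    apply/subsetP => y yu; rewrite !inE (subsetP Huv _ yu) andbT.
    by apply: contraNneq xu => <-.
  by move: (cardsD1 x v); rewrite xv Hv Hu /= add1n => -[->].
- case/imsetP => [[v x]]; rewrite inE /= /hh => /andP[/eqP Hv Hx] ->.
  rewrite inE; apply/existsP; exists (v :\ x); apply/existsP; exists v.
  rewrite eqxx Hv eqxx subD1set andbT /=.
  by move: (cardsD1 x v); rewrite Hx Hv /= add1n => -[->]; rewrite eqxx.
Qed.

Definition rr (v : T) : T := if [pick x in v] is Some x then v :\ x else v.
Definition FF : {set {set T}} := [set [set rr v; v] | v in [set v : T | #|v| == k.+1]].

Lemma rr_card (v : T) : #|v| = k.+1 -> #|rr v| = k /\ exists2 x, x \in v & rr v = v :\ x.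
Proof.
move=> Hv; rewrite /rr; case: pickP => [x xv|H]; last first.
  by move: Hv; rewrite (eq_card0 H).
split; last by exists x.
by move: (cardsD1 x v); rewrite xv Hv; case.
Qed.

Lemma FF_sub : FF \subset G.
Proof.
rewrite G_eq; apply/subsetP => e /imsetP[v]; rewrite inE => /eqP Hv ->.
have [_ [x xv ->]] := rr_card Hv.
by apply/imsetP; exists (v, x); rewrite // inE /= Hv eqxx xv.
Qed.

Lemma FF_card : #|FF| = 'C(n, k.+1).
Proof.
rewrite card_in_imset ?card_draws ?card_ord //.
move=> v w; rewrite !inE => /eqP Hv /eqP Hw E.
have : v \in [set rr w; w] by rewrite -E !inE eqxx orbT.
rewrite !inE => /orP[/eqP H|/eqP //].
have [C _] := rr_card Hw. by move: Hv; rewrite H C; lia.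
Qed.

Lemma FF_at (v : T) e : #|v| = k.+1 -> e \in FF -> v \in e -> e = [set rr v; v].
Proof.
move=> Hv /imsetP[w]; rewrite inE => /eqP Hw -> ; rewrite !inE => /orP[/eqP H|/eqP -> //].
have [C _] := rr_card Hw. by move: Hv; rewrite H C; lia.
Qed.

Lemma FF_nocycle m : 3 <= m -> ~~ has_cycle FF m.
Proof.
move=> Hm; apply/negP => /existsP[f /andP[/injectiveP finj /forallP Hf]].
have i0 : 'I_m by exists 0; lia.
have : [set f i0; f (ordS i0)] \in FF by exact: Hf.
case/imsetP => v; rewrite inE => /eqP Hv E.
have [j Hj] : exists j, f j = v.
  have : v \in [set f i0; f (ordS i0)] by rewrite E !inE eqxx orbT.
  by rewrite !inE => /orP[/eqP H|/eqP H]; [exists i0|exists (ordS i0)]; rewrite H.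
set p := ord_pred j.
have Hp : ordS p = j by rewrite /p ord_predK.
have e1 := FF_at Hv (Hf j).
have e2 := FF_at Hv (Hf p).
have A : forall a, [set v; a] = [set rr v; v] -> a != v -> a = rr v.
  move=> a Ea ne; have : a \in [set rr v; v] by rewrite -Ea !inE eqxx orbT.
  by rewrite !inE (negbTE ne) orbF => /eqP.
have B : forall a, [set a; v] = [set rr v; v] -> a != v -> a = rr v.
  by move=> a Ea; apply: A; rewrite setUC.
have a1 : f (ordS j) = rr v.
  apply: A; first by rewrite -Hj e1 ?Hj // !inE eqxx.
  by rewrite -Hj; apply/eqP => /finj H; have [C _] := ordS_ne j Hm; move: C; rewrite H eqxx.
have a2 : f p = rr v.
  apply: B; first by rewrite -e2 ?Hp ?Hj // !inE eqxx orbT.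
  by rewrite -Hj -Hp; apply/eqP => /finj H; have [C _] := ordS_ne p Hm; move: C; rewrite -H eqxx.
have : ordS (ordS p) = p by apply: finj; rewrite Hp a1 a2.
by apply/eqP; have [_ C] := ordS_ne p Hm.
Qed.

End S.

Theorem mainTheorem6 (k n l : nat) :
  1 <= k -> 2 * k + 1 <= n -> 2 <= l ->
  'C(n, k.+1) <= ex_cycle (doubled_johnson_edges n k) (2 * l) /\
  'C(n, k.+1) * k.+1 = #|doubled_johnson_edges n k|.
Proof.
move=> _ _ Hl; split; last by rewrite G_eq card_in_imset ?PP_card //; apply: PP_inj.
rewrite -(FF_card n k) /ex_cycle.
apply: (@leq_bigmax_cond _ (fun F : {set {set {set 'I_n}}} => (F \subset doubled_johnson_edges n k) && ~~ has_cycle F (2 * l)) (fun F => #|F|)).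
by rewrite FF_sub FF_nocycle //; lia.
Qed.
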